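(* Let $M$ be a loopless matroid on $E=\{0,\dots,n\}$. The Bergman classes $\{\Delta_{M'} : M' \text{ a loopless relative nested quotient of } M\}$ are linearly independent in $\operatorname{MW}_\bullet(\Sigma_{A_n})$.
   Context: $\Sigma_{A_n}$ is the braid fan in $\mathbb R^E/\mathbb R\mathbf e_E$, with cones $\operatorname{Cone}(u_{S_1},\dots,u_{S_k})$ for chains of subsets $\emptyset\subsetneq S_1\subsetneq\cdots\subsetneq S_k\subsetneq E$, where $u_S$ is the image of $\sum_{i\in S}\mathbf e_i$; $\operatorname{MW}_\ell(\Sigma_{A_n})$ is the space of $\ell$-dimensional Minkowski weights (balanced real functions on $\ell$-dimensional cones) and $\operatorname{MW}_\bullet=\bigoplus_\ell\operatorname{MW}_\ell$. For a loopless matroid $M'$ of rank $r'$, $\Delta_{M'}\in\operatorname{MW}_{r'-1}(\Sigma_{A_n})$ equals $1$ on cones $\operatorname{Cone}(u_{F_1},\dots,u_{F_{r'-1}})$ with all $F_i$ flats of $M'$ and $0$ otherwise. $M'$ is a quotient of $M$ ($f:M'\twoheadleftarrow M$) if every flat of $M'$ is a flat of $M$; $n_f(A)=\operatorname{rk}_M(A)-\operatorname{rk}_{M'}(A)$; an $f$-cyclic flat is a flat $F$ of $M'$ minimal under inclusion among flats of $M'$ of the same $f$-nullity; $M'$ is a relative nested quotient if its $f$-cyclic flats form a chain. *)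

(* Defs.v *)
From mathcomp Require Import all_boot all_order all_algebra.
From mathcomp Require Import reals.
Set Implicit Arguments. Unset Strict Implicit. Unset Printing Implicit Defensive.
Import GRing.Theory Num.Theory.

Section Matroids.
Variable E : finType.

Definition rankfun := {ffun {set E} -> nat}.

Definition is_matroid (r : rankfun) : Prop :=
  [/\ forall A : {set E}, r A <= #|A|,
      forall A B : {set E}, A \subset B -> r A <= r B
    & forall A B : {set E}, r (A :|: B) + r (A :&: B) <= r A + r B].

Definition loopless (r : rankfun) : Prop := forall e : E, r [set e] = 1.

Definition is_flat (r : rankfun) (F : {set E}) : bool :=
  [forall x, (x \notin F) ==> (r F < r (x |: F))].

Definition is_quotient (r' r : rankfun) : Prop :=
  forall F : {set E}, is_flat r' F -> is_flat r F.

Definition fnullity (r r' : rankfun) (A : {set E}) : int :=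
  (r A)%:Z - (r' A)%:Z.

Definition is_fcyclic_flat (r r' : rankfun) (F : {set E}) : Prop :=
  is_flat r' F /\
  forall G : {set E}, is_flat r' G -> G \proper F ->
    fnullity r r' G <> fnullity r r' F.

Definition is_relative_nested (r r' : rankfun) : Prop :=
  forall F G : {set E}, is_fcyclic_flat r r' F -> is_fcyclic_flat r r' G ->
    F \subset G \/ G \subset F.

Definition loopless_relative_nested_quotient (r r' : rankfun) : Prop :=
  [/\ is_matroid r', loopless r', is_quotient r' r & is_relative_nested r r'].

(* Cones of the braid fan: chains of nonempty proper subsets of E;
   the cone Cone(u_S : S in C) has dimension #|C|. *)
Definition is_chain (C : {set {set E}}) : bool :=
  [forall S in C, (S != set0) && (S != setT)] &&
  [forall S in C, forall T in C, (S \subset T) || (T \subset S)].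

(* Bergman class Delta_{M'}, as a (graded) function on the cones of the braid
   fan: 1 on the (rk M' - 1)-dimensional cones spanned by flats of M', 0
   elsewhere. *)
Definition bergman (R : nzRingType) (r' : rankfun) (C : {set {set E}}) : R :=
  if (#|C| == (r' setT).-1) && [forall S in C, is_flat r' S] then 1%R else 0%R.

End Matroids.

(* Main.v *)
Require Import Defs.
From mathcomp Require Import all_boot all_order all_algebra.
From mathcomp Require Import reals zify.
Set Implicit Arguments. Unset Strict Implicit. Unset Printing Implicit Defensive.
Import GRing.Theory Num.Theory.
Lemma r_mono (E : finType) (r : rankfun E) : is_matroid r ->
  forall A B : {set E}, A \subset B -> r A <= r B.
Proof. by case. Qed.

Lemma r_sub (E : finType) (r : rankfun E) : is_matroid r ->
  forall A B : {set E}, r (A :|: B) + r (A :&: B) <= r A + r B.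
Proof. by case. Qed.

Lemma r_card (E : finType) (r : rankfun E) : is_matroid r ->
  forall A : {set E}, r A <= #|A|.
Proof. by case. Qed.

Lemma r_set0 (E : finType) (r : rankfun E) : is_matroid r -> r set0 = 0.
Proof. move=> hr; have := r_card hr set0; rewrite cards0; lia. Qed.

Lemma r_add1 (E : finType) (r : rankfun E) : is_matroid r ->
  forall (A : {set E}) x, r (x |: A) <= (r A).+1.
Proof.
move=> hr A x; have := r_sub hr [set x] A; have := r_card hr [set x].
rewrite cards1; lia.
Qed.

Definition cl (E : finType) (r : rankfun E) (A : {set E}) :=
  [set x | r (x |: A) <= r A].

Lemma cl_sub (E : finType) (r : rankfun E) (A : {set E}) : A \subset cl r A.
Proof. by apply/subsetP => x xA; rewrite inE (setUidPr _) // sub1set. Qed.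

Lemma setU_cons (E : finType) (A : {set E}) x (xs : seq E) :
  A :|: [set y in x :: xs] = x |: (A :|: [set y in xs]).
Proof. by apply/setP => y; rewrite !inE; case: (y == x); case: (y \in A). Qed.

Lemma cl_step (E : finType) (r : rankfun E) : is_matroid r ->
  forall (A B : {set E}) x, A \subset B -> r (x |: A) <= r A -> r (x |: B) <= r B.
Proof.
move=> hr A B x AB hx.
have := r_sub hr (x |: A) B.
have -> : (x |: A) :|: B = x |: B.
  by apply/setP => y; rewrite !inE; case: (y == x) => //=; case yA: (y \in A) => //=;
     rewrite (subsetP AB).
have : r A <= r ((x |: A) :&: B).
  apply: r_mono hr _ _ _; rewrite subsetI AB andbT; exact: subsetUr.
lia.
Qed.

Lemma r_cl_seq (E : finType) (r : rankfun E) : is_matroid r ->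
  forall (A : {set E}) (xs : seq E), all (fun x => x \in cl r A) xs ->
  r (A :|: [set y in xs]) = r A.
Proof.
move=> hr A; elim=> [|x xs IH] /=.
  by move=> _; congr (r _); apply/setP => y; rewrite !inE orbF.
case/andP=> xc /IH e; rewrite setU_cons.
have h1 := r_mono hr (subsetUr [set x] (A :|: [set y in xs])).
have h2 : r (x |: (A :|: [set y in xs])) <= r (A :|: [set y in xs]).
  apply: (cl_step hr (A := A)) => //; first exact: subsetUl.
  by move: xc; rewrite inE.
lia.
Qed.

Lemma r_cl (E : finType) (r : rankfun E) : is_matroid r ->
  forall A : {set E}, r (cl r A) = r A.
Proof.
move=> hr A; have := @r_cl_seq E r hr A (enum (cl r A)).
rewrite set_enum (setUidPr (cl_sub r A)); apply; apply/allP => x; by rewrite mem_enum.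
Qed.

Lemma cl_flat (E : finType) (r : rankfun E) : is_matroid r ->
  forall A : {set E}, is_flat r (cl r A).
Proof.
move=> hr A; apply/forallP => x; apply/implyP => xn.
rewrite ltnNge; apply/negP => h; move: xn; rewrite inE; apply/negP/negPn.
have := r_mono hr (setUS [set x] (cl_sub r A)).
rewrite r_cl // in h; lia.
Qed.

Lemma flat_lt (E : finType) (r : rankfun E) : is_matroid r ->
  forall F G : {set E}, is_flat r F -> F \proper G -> r F < r G.
Proof.
move=> hr F G /forallP fF /properP [FG [x xG xF]].
have := implyP (fF x) xF; have := r_mono hr (A := x |: F) (B := G).
rewrite subUset sub1set xG FG => /(_ isT); lia.
Qed.

Lemma cl_sub_flat (E : finType) (r : rankfun E) : is_matroid r ->
  forall A F : {set E}, is_flat r F -> A \subset F -> cl r A \subset F.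
Proof.
move=> hr A F fF AF; apply/subsetP => x; rewrite inE => hx.
apply/negPn/negP => xF.
have := implyP (forallP fF x) xF.
have := r_sub hr F (x |: A).
have -> : F :|: (x |: A) = x |: F.
  apply/setP => y; rewrite !inE; case: (y == x); case yF: (y \in F) => //=.
  by case yA: (y \in A) => //; rewrite (subsetP AF) in yF.
have : r A <= r (F :&: (x |: A)).
  apply: r_mono hr _ _ _; rewrite subsetI AF; exact: subsetUr.
lia.
Qed.

Lemma cl_of_flat (E : finType) (r : rankfun E) : is_matroid r ->
  forall F : {set E}, is_flat r F -> cl r F = F.
Proof.
move=> hr F fF; apply/eqP; rewrite eqEsubset cl_sub andbT; exact: cl_sub_flat.
Qed.

Lemma loopless_pos (E : finType) (r : rankfun E) : is_matroid r -> loopless r ->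
  forall A : {set E}, A != set0 -> 0 < r A.
Proof.
move=> hr hl A /set0Pn [x xA]; have := r_mono hr (A := [set x]) (B := A).
rewrite sub1set xA hl; lia.
Qed.

Lemma flat0 (E : finType) (r : rankfun E) : is_matroid r -> loopless r ->
  is_flat r set0.
Proof.
move=> hr hl; apply/forallP => x; apply/implyP => _.
by rewrite setU0 hl r_set0.
Qed.

Lemma flatT (E : finType) (r : rankfun E) : is_flat r setT.
Proof. by apply/forallP => x; rewrite inE. Qed.

Lemma quot_step (E : finType) (r r' : rankfun E) : is_matroid r -> is_matroid r' ->
  is_quotient r' r -> forall (A : {set E}) x,
  r' (x |: A) + r A <= r (x |: A) + r' A.
Proof.
move=> hr hr' hq A x.
have m1 := r_mono hr (subsetUr [set x] A).
case: (leqP (r (x |: A)) (r A)) => h.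
  have F1 : is_flat r (cl r' A) by apply: hq; exact: cl_flat.
  have : x \in cl r' A.
    apply: (subsetP (cl_sub_flat hr F1 (cl_sub r' A))); by rewrite inE.
  rewrite inE; lia.
have := r_add1 hr' A x; lia.
Qed.

Lemma quot_ineq (E : finType) (r r' : rankfun E) : is_matroid r -> is_matroid r' ->
  is_quotient r' r -> forall A B : {set E}, A \subset B ->
  r' B + r A <= r B + r' A.
Proof.
move=> hr hr' hq A B AB.
suff H : forall xs : seq E, r' (A :|: [set y in xs]) + r A <= r (A :|: [set y in xs]) + r' A.
  have eB : A :|: B :\: A = B.
    apply/setP => y; rewrite !inE; case yA: (y \in A) => //=.
    by rewrite (subsetP AB).
  by have := H (enum (B :\: A)); rewrite set_enum eB.
elim=> [|x xs IH].
  have -> : A :|: [set y in [::]] = A by apply/setP => y; rewrite !inE orbF.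
  lia.
rewrite setU_cons; have := quot_step hr hr' hq (A :|: [set y in xs]) x; lia.
Qed.
Lemma fcyc_exists (E : finType) (r r' : rankfun E) : is_matroid r -> is_matroid r' ->
  is_quotient r' r -> forall A : {set E}, exists Z,
  is_fcyclic_flat r r' Z /\ r' Z + r (A :|: Z) <= r' A + r Z.
Proof.
move=> hr hr' hq A.
pose F := cl r' A.
pose P := fun G : {set E} =>
  [&& is_flat r' G, G \subset F & r G + r' F == r F + r' G].
have PF : P F by rewrite /P cl_flat // subxx eqxx.
case: (arg_minnP (fun G : {set E} => #|G|) PF) => Z /and3P [fZ ZF /eqP eZ] minZ.
exists Z; split.
  split=> // G fG GZ eG.
  have PG : P G.
    rewrite /P fG (subset_trans (proper_sub GZ) ZF) /=.
    move: eG; rewrite /fnullity => eG; apply/eqP; lia.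
  have := minZ G PG; have := proper_card GZ; lia.
have rF : r' F = r' A by rewrite r_cl.
have AF : A \subset F by exact: cl_sub.
have AZF : A :|: Z \subset F by rewrite subUset AF ZF.
have h1 := quot_ineq hr hr' hq AZF.
have h2 := r_mono hr' (subsetUl A Z).
have h3 := r_mono hr' AZF.
lia.
Qed.
Lemma chain_ne (E : finType) (C : {set {set E}}) : is_chain C ->
  forall S, S \in C -> (S != set0) && (S != setT).
Proof. by case/andP => /forallP h _ S SC; have := implyP (h S) SC. Qed.

Lemma chain_cmp (E : finType) (C : {set {set E}}) : is_chain C ->
  forall S T, S \in C -> T \in C -> (S \subset T) || (T \subset S).
Proof.
case/andP => _ /forallP h S T SC TC.
by have := implyP (h S) SC => /forallP /(_ T) /implyP /(_ TC).
Qed.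

Lemma cmp_flat_sub (E : finType) (q : rankfun E) : is_matroid q ->
  forall S T : {set E}, is_flat q S -> is_flat q T ->
  (S \subset T) || (T \subset S) -> q S <= q T -> S \subset T.
Proof.
move=> hq S T fS fT /orP [//|TS] le.
case: (eqVneq T S) => [->|ne]; first exact: subxx.
have : T \proper S by rewrite properEneq ne TS.
move/(flat_lt hq fT); lia.
Qed.

Lemma flats_of (E : finType) (q : rankfun E) (C : {set {set E}}) :
  [forall S in C, is_flat q S] -> forall S, S \in C -> is_flat q S.
Proof. by move/forallP => h S SC; have := implyP (h S) SC. Qed.

Lemma chain_inj (E : finType) (q : rankfun E) (C : {set {set E}}) : is_matroid q ->
  is_chain C -> [forall S in C, is_flat q S] ->
  {in C &, injective (fun S => q S)}.
Proof.
move=> hq hC hf S T SC TC e.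
have fS := flats_of hf SC; have fT := flats_of hf TC.
apply/eqP; rewrite eqEsubset.
rewrite (cmp_flat_sub hq fS fT (chain_cmp hC SC TC)) ?e //.
by rewrite (cmp_flat_sub hq fT fS) ?e // orbC (chain_cmp hC SC TC).
Qed.

Lemma chain_range (E : finType) (q : rankfun E) (C : {set {set E}}) : is_matroid q ->
  loopless q -> is_chain C -> [forall S in C, is_flat q S] ->
  forall S, S \in C -> 0 < q S < q setT.
Proof.
move=> hq hl hC hf S SC; case/andP: (chain_ne hC SC) => ne0 neT.
rewrite loopless_pos //=.
have := @flat_lt E q hq S setT (flats_of hf SC); apply.
by rewrite properEneq neT subsetT.
Qed.

Lemma chain_uniq (E : finType) (q : rankfun E) (C : {set {set E}}) : is_matroid q ->
  is_chain C -> [forall S in C, is_flat q S] ->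
  uniq (map (fun S => q S) (enum C)).
Proof.
move=> hq hC hf; rewrite map_inj_in_uniq ?enum_uniq //.
move=> S T; rewrite !mem_enum; exact: chain_inj.
Qed.

Lemma chain_sub_iota (E : finType) (q : rankfun E) (C : {set {set E}}) : is_matroid q ->
  loopless q -> is_chain C -> [forall S in C, is_flat q S] ->
  {subset map (fun S => q S) (enum C) <= iota 1 (q setT).-1}.
Proof.
move=> hq hl hC hf j /mapP [S]; rewrite mem_enum => SC ->.
have := chain_range hq hl hC hf SC; rewrite mem_iota; lia.
Qed.

Lemma chain_card_le (E : finType) (q : rankfun E) (C : {set {set E}}) : is_matroid q ->
  loopless q -> is_chain C -> [forall S in C, is_flat q S] ->
  #|C| <= (q setT).-1.
Proof.
move=> hq hl hC hf; have := uniq_leq_size (chain_uniq hq hC hf) (chain_sub_iota hq hl hC hf).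
by rewrite size_map size_iota -cardE.
Qed.

Lemma chain_full (E : finType) (q : rankfun E) (C : {set {set E}}) : is_matroid q ->
  loopless q -> is_chain C -> [forall S in C, is_flat q S] ->
  #|C| = (q setT).-1 -> forall j, 0 < j < q setT -> exists2 Y, Y \in C & q Y = j.
Proof.
move=> hq hl hC hf hcard j hj.
have [_ eq] := uniq_min_size (chain_uniq hq hC hf) (chain_sub_iota hq hl hC hf)
  ltac:(by rewrite size_map size_iota -cardE hcard).
have : j \in iota 1 (q setT).-1 by rewrite mem_iota; lia.
rewrite -eq => /mapP [Y]; rewrite mem_enum => YC ->; by exists Y.
Qed.

Lemma chain_count (E : finType) (q : rankfun E) (C : {set {set E}}) : is_matroid q ->
  loopless q -> is_chain C -> [forall S in C, is_flat q S] ->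
  #|C| = (q setT).-1 -> forall Z, Z \in C -> q Z = #|[set Y in C | Y \subset Z]|.
Proof.
move=> hq hl hC hf hcard Z ZC.
pose S := [set Y in C | Y \subset Z].
have hS : is_chain S /\ [forall Y in S, is_flat q Y].
  split.
    apply/andP; split; apply/forallP => Y; apply/implyP; rewrite inE => /andP [YC _].
      exact: chain_ne hC _ YC.
    apply/forallP => T; apply/implyP; rewrite inE => /andP [TC _].
    exact: chain_cmp hC _ _ YC TC.
  apply/forallP => Y; apply/implyP; rewrite inE => /andP [YC _].
  exact: flats_of hf _ YC.
have u1 := chain_uniq hq hS.1 hS.2.
have hZ := chain_range hq hl hC hf ZC.
have e : map (fun Y => q Y) (enum S) =i iota 1 (q Z).
  move=> j; apply/idP/idP.
    case/mapP => Y; rewrite mem_enum inE => /andP [YC YZ] ->.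
    have := chain_range hq hl hC hf YC; have := r_mono hq YZ; rewrite mem_iota; lia.
  rewrite mem_iota => hj.
  have [Y YC qY] := chain_full hq hl hC hf hcard (j := j) ltac:(lia).
  apply/mapP; exists Y => //; rewrite mem_enum inE YC /=.
  have := cmp_flat_sub hq (flats_of hf YC) (flats_of hf ZC) (chain_cmp hC YC ZC).
  apply; lia.
have := perm_size (uniq_perm u1 (iota_uniq 1 (q Z)) e).
by rewrite size_map size_iota -cardE.
Qed.
Lemma flag_exists (E : finType) (q : rankfun E) (D : {set {set E}}) :
  is_matroid q -> loopless q -> is_chain D -> [forall S in D, is_flat q S] ->
  exists C : {set {set E}}, [/\ D \subset C, is_chain C,
    [forall S in C, is_flat q S] & #|C| = (q setT).-1].
Proof.
move=> hq hl hD hfD.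
pose P := fun C : {set {set E}} =>
  [&& D \subset C, is_chain C & [forall S in C, is_flat q S]].
have PD : P D by rewrite /P subxx hD hfD.
case: (arg_maxnP (fun C : {set {set E}} => #|C|) PD) => C /and3P [DC hC hf] maxC.
exists C; split => //.
apply/eqP; rewrite eqn_leq chain_card_le //=.
have : {subset iota 1 (q setT).-1 <= map (fun S => q S) (enum C)}.
  move=> j; rewrite mem_iota => hj.
  case: (boolP [exists Y in C, q Y == j]).
    case/existsP => Y /andP [YC /eqP <-]; apply/mapP; exists Y => //.
    by rewrite mem_enum.
  move/existsPn => noj.
  have {}noj : forall Y, Y \in C -> q Y != j.
    by move=> Y YC; have := noj Y; rewrite YC.
  exfalso.
  pose ext := fun X : {set E} => [|| X == set0, X == setT | X \in C].
  have cmp_ext : forall X Y, ext X -> ext Y -> (X \subset Y) || (Y \subset X).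
    move=> X Y /or3P [/eqP->|/eqP->|XC] /or3P [/eqP->|/eqP->|YC];
      rewrite ?sub0set ?subsetT ?orbT //.
    exact: (@chain_cmp E C hC X Y XC YC).
  have flat_ext : forall X, ext X -> is_flat q X.
    move=> X /or3P [/eqP->|/eqP->|XC]; [exact: flat0 | exact: flatT | exact: flats_of hf _ XC].
  pose PF := fun X : {set E} => ((X == set0) || (X \in C)) && (q X < j).
  have PF0 : PF set0 by rewrite /PF eqxx r_set0 //; clear -hj; lia.
  case: (arg_maxnP (fun X : {set E} => q X) PF0) => F /andP [eF qFj] maxF.
  pose PG := fun X : {set E} => ((X == setT) || (X \in C)) && (j < q X).
  have PGT : PG setT by rewrite /PG eqxx /=; clear -hj; lia.
  case: (arg_minnP (fun X : {set E} => q X) PGT) => G /andP [eG qGj] minG.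
  have extF : ext F by case/orP: eF => [/eqP->|FC]; rewrite /ext ?eqxx ?FC ?orbT.
  have extG : ext G by case/orP: eG => [/eqP->|GC]; rewrite /ext ?eqxx ?GC ?orbT.
  have fF := flat_ext F extF; have fG := flat_ext G extG.
  have FG : F \subset G.
    apply: (cmp_flat_sub hq fF fG (cmp_ext F G extF extG)); clear -qFj qGj; lia.
  have FpG : F \proper G.
    rewrite properEneq FG andbT; apply/eqP => eFG; move: qFj; rewrite eFG => qFj'; clear -qFj' qGj; lia.
  case/properP: FpG => _ [x xG xF].
  pose H := cl q (x |: F).
  have qH : q H = (q F).+1.
    rewrite r_cl //; have h1 := implyP (forallP fF x) xF; have h2 := r_add1 hq F x; clear -h1 h2; lia.
  have HG : H \subset G.
    apply: cl_sub_flat => //; by rewrite subUset sub1set xG FG.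
  have FH : F \subset H := subset_trans (subsetUr [set x] F) (cl_sub q (x |: F)).
  have xH : x \in H.
    by apply: (subsetP (cl_sub q (x |: F))); rewrite !inE eqxx.
  have HC : H \notin C.
    apply/negP => HC; have := noj H HC; have := maxF H; rewrite /PF HC orbT /=.
    rewrite qH => a b; clear -a b qFj; lia.
  have cmpH : forall S, S \in C -> (S \subset H) || (H \subset S).
    move=> S SC; have := noj S SC => /eqP nS.
    have fS := flats_of hf SC.
    case: (ltngtP (q S) j) => hS //.
      have := maxF S; rewrite /PF SC orbT hS /= => /(_ isT) le.
      have extS : ext S by rewrite /ext SC !orbT.
      by rewrite (subset_trans (cmp_flat_sub hq fS fF (cmp_ext S F extS extF) le) FH).
    have := minG S; rewrite /PG SC orbT hS /= => /(_ isT) le.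
    have extS : ext S by rewrite /ext SC !orbT.
    by rewrite (subset_trans HG (cmp_flat_sub hq fG fS (cmp_ext G S extG extS) le)) orbT.
  have hneH : (H != set0) && (H != setT).
    apply/andP; split; first by apply/set0Pn; exists x.
    apply/eqP => HT; have h1 := r_mono hq (subsetT G).
    rewrite -HT qH in h1; clear -h1 qGj qFj; lia.
  have PH : P (H |: C).
    apply/and3P; split.
    - exact: subset_trans DC (subsetUr _ _).
    - apply/andP; split.
        apply/forallP => S; apply/implyP; rewrite in_setU1 => /orP [/eqP->//|SC].
        exact: chain_ne hC _ SC.
      apply/forallP => S; apply/implyP; rewrite in_setU1 => /orP [/eqP->|SC];
        apply/forallP => T; apply/implyP; rewrite in_setU1 => /orP [/eqP->|TC].
      + by rewrite subxx.
      + by rewrite orbC; apply: cmpH.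
      + exact: cmpH.
      + exact: chain_cmp hC _ _ SC TC.
    - apply/forallP => S; apply/implyP; rewrite in_setU1 => /orP [/eqP->|SC].
        exact: cl_flat.
      exact: flats_of hf _ SC.
  have h := maxC _ PH; rewrite cardsU1 HC in h; clear -h; lia.
move/(uniq_leq_size (iota_uniq 1 _)).
by rewrite size_iota size_map -cardE.
Qed.
Definition fcycb (E : finType) (r r' : rankfun E) (F : {set E}) : bool :=
  is_flat r' F && [forall G, (is_flat r' G && (G \proper F)) ==>
                               (fnullity r r' G != fnullity r r' F)].

Lemma fcycP (E : finType) (r r' : rankfun E) (F : {set E}) :
  reflect (is_fcyclic_flat r r' F) (fcycb r r' F).
Proof.
apply: (iffP andP) => [[fF /forallP h]|[fF h]]; split => //.
  move=> G fG GF; apply/eqP; have := implyP (h G); rewrite fG GF; by apply.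
apply/forallP => G; apply/implyP => /andP [fG GF]; apply/eqP; exact: h.
Qed.

Lemma seq_min0 (T : eqType) (w : T -> nat) (s : seq T) : s != [::] ->
  exists2 m, m \in s & forall y, y \in s -> w m <= w y.
Proof.
elim: s => [//|a s IH] _.
case: s IH => [|b s] IH.
  by exists a; rewrite ?inE ?eqxx // => y; rewrite inE => /eqP->.
have [m ms hm] := IH isT.
exists (if w a <= w m then a else m).
  by case: ifP; rewrite inE ?eqxx ?ms ?orbT.
move=> y; rewrite inE => /orP [/eqP->|ys]; case: ifP => h //.
- by rewrite leqNgt; apply/negP => h'; move/negbT: h; rewrite -ltnNge => h2; clear -h2 h'; lia.
- have := hm y ys; clear -h; lia.
- exact: hm.
Qed.

Lemma seq_min (T : eqType) (w : T -> nat) (s : seq T) x0 : x0 \in s ->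
  exists2 m, m \in s & forall y, y \in s -> w m <= w y.
Proof. by move=> xs; apply: seq_min0; case: s xs. Qed.

Lemma sum_lt (T : finType) (f g : T -> nat) (a : T) :
  (forall A, f A <= g A) -> f a < g a -> \sum_A f A < \sum_A g A.
Proof.
move=> le lt; rewrite (bigD1 a) //= [X in _ < X](bigD1 a) //=.
have h : \sum_(i | i != a) f i <= \sum_(i | i != a) g i by apply: leq_sum => i _.
move: h lt; clear; lia.
Qed.
Lemma key_le (E : finType) (r m x : rankfun E) : is_matroid r ->
  is_matroid m -> is_quotient m r -> is_matroid x -> is_quotient x r ->
  (forall Z, is_fcyclic_flat r m Z -> x Z = m Z) ->
  forall A, x A <= m A.
Proof.
move=> hr hm hmq hx hxq eqZ A.
have [Z [fZ ineq]] := fcyc_exists hr hm hmq A.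
have h1 := quot_ineq hr hx hxq (subsetUr A Z).
have h2 := r_mono hx (subsetUl A Z).
have h3 := eqZ Z fZ.
clear -ineq h1 h2 h3; lia.
Qed.

Local Open Scope ring_scope.

Theorem proposition3p25 (R : realType) (n : nat) (r : rankfun 'I_n.+1) :
  is_matroid r -> loopless r ->
  forall (s : seq (rankfun 'I_n.+1)) (c : rankfun 'I_n.+1 -> R),
    uniq s ->
    (forall r' : rankfun 'I_n.+1, r' \in s ->
        loopless_relative_nested_quotient r r') ->
    (forall C : {set {set 'I_n.+1}}, is_chain C ->
        \sum_(r' <- s) c r' * bergman R r' C = 0) ->
    forall r' : rankfun 'I_n.+1, r' \in s -> c r' = 0.
Proof.
move=> hr hl s c us hs hsum r0 r0s.
case: (eqVneq (c r0) 0) => // c0; exfalso.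
pose w := fun x : rankfun 'I_n.+1 => (\sum_(A : {set 'I_n.+1}) x A)%N.
have r0P : r0 \in [seq x <- s | c x != 0] by rewrite mem_filter c0.
have [m mP minm] := seq_min w r0P.
move: mP; rewrite mem_filter => /andP [cm ms].
have [hm hml hmq hmn] := hs m ms.
pose D := [set Z | [&& fcycb r m Z, Z != set0 & Z != setT]].
have hD : is_chain D.
  apply/andP; split; apply/forallP => S; apply/implyP; rewrite inE => /and3P [fS S0 ST].
    by rewrite S0 ST.
  apply/forallP => T; apply/implyP; rewrite inE => /and3P [fT _ _].
  by case: (hmn S T (fcycP _ _ _ fS) (fcycP _ _ _ fT)) => ->; rewrite ?orbT.
have hfD : [forall S in D, is_flat m S].
  by apply/forallP => S; apply/implyP; rewrite inE => /and3P [/andP [] ].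
have [C [DC hC hfC hcard]] := flag_exists hm hml hD hfD.
have Tne : [set: 'I_n.+1] != set0 by apply/set0Pn; exists ord0.
have others : forall x, x \in s -> x != m -> c x * bergman R x C = 0.
  move=> x xs xm.
  case: (eqVneq (c x) 0) => [->|cx]; first by rewrite mul0r.
  rewrite /bergman; case: ifP => [/andP [/eqP hcx hfx]|_]; last by rewrite mulr0.
  exfalso.
  have [hx hxl hxq _] := hs x xs.
  have eqC : forall Z, Z \in C -> x Z = m Z.
    move=> Z ZC; rewrite (chain_count hx hxl hC hfx hcx ZC).
    by rewrite (chain_count hm hml hC hfC hcard ZC).
  have eqT : x setT = m setT.
    have h1 := loopless_pos hx hxl Tne; have h2 := loopless_pos hm hml Tne.
    move: hcx; rewrite hcard => h3.
    by rewrite -(prednK h1) -(prednK h2) h3.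
  have eqZ : forall Z, is_fcyclic_flat r m Z -> x Z = m Z.
    move=> Z fZ.
    case: (eqVneq Z set0) => [->|Z0]; first by rewrite !r_set0.
    case: (eqVneq Z setT) => [->|ZT]; first exact: eqT.
    apply: eqC; apply: (subsetP DC); rewrite inE Z0 ZT !andbT.
    exact/fcycP.
  have le := key_le hr hm hmq hx hxq eqZ.
  case: (boolP [exists A, x A != m A]) => [/existsP [A hA]|/existsPn h].
    have lt : (x A < m A)%N by rewrite ltn_neqAle hA le.
    have := minm x; rewrite mem_filter cx xs => /(_ isT).
    move=> h2; have h1 := sum_lt le lt.
    by have := leq_ltn_trans h2 h1; rewrite ltnn.
  move/eqP: xm; apply; apply/ffunP => A; apply/eqP; exact: negbNE (h A).
have := hsum C hC.
rewrite (bigD1_seq m) //= big_seq_cond big1 ?addr0.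
  rewrite /bergman hcard eqxx hfC /= mulr1 => e.
  by move: cm; rewrite e eqxx.
by move=> x /andP [xs xm]; apply: others.
Qed.
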